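(* For a thermodynamic Stephani universe with $\dot R\neq0$, $b'(R)\neq0$ and $a(R)\neq0$, one has $$\pi=\frac p\rho=\frac{a(R)\,(1+b w)}{1+(b-Rb')w}-1,$$ and the indicatrix $\chi=u(p)/u(\rho)$ is $$\chi=\pi+\frac13+\frac13(\pi+1)\big[(\pi+1)A_1(R)+A_2(R)\big],\qquad A_1=-\frac{Rb''}{a^2b'},\quad A_2=\frac{Rb''}{ab'}-\frac{a'R}{a^2}-\frac1a .$$ Consequently (since $\rho$ is a function of $R$), $c_s^2=\chi(\rho,p)=\pi+\frac13+\frac13(\pi+1)[(\pi+1)A_1(\rho)+A_2(\rho)]$ for two real functions $A_1(\rho),A_2(\rho)$.
   Context: Thermodynamic Stephani universe: $ds^2=-\alpha^2dt^2+\Omega^2(dx^2+dy^2+dz^2)$ with $L=R(t)/(1+b(t)w)$, $\Omega=\frac{w}{2z}L$, $\alpha=R\,\partial_R\ln L$, $w=2z/(1+\frac\varepsilon4 r^2)$, $r^2=x^2+y^2+z^2$, $\varepsilon\in\{0,\pm1\}$, $R(t),b(t)$ arbitrary; functions of $t$ are regarded as functions of $R$ and a prime denotes $d/dR$; thus $\alpha=\frac{1+(b-Rb')w}{1+bw}$. Fluid velocity $u=\alpha^{-1}\partial_t$, $\rho=\frac{3}{R^2}(\dot R^2+\varepsilon-4b^2)$, $p=-\rho-\frac R3\frac{\rho'(R)}{\alpha}$, and $a(R)\equiv-\frac{R\rho'(R)}{3\rho}$. *)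

(* Defs.v *)
From Stdlib Require Import Reals.
From Coquelicot Require Import Coquelicot.
Open Scope R_scope.

Definition rsq (x y z : R) : R := x ^ 2 + y ^ 2 + z ^ 2.

Definition wcoord (eps x y z : R) : R := 2 * z / (1 + eps / 4 * rsq x y z).

(* Lapse  alpha = (1 + (b - R b') w) / (1 + b w), with b regarded as a function of R;
   Rf : t |-> R(t),  bR : R |-> b(R). *)
Definition alphaF (eps : R) (Rf bR : R -> R) (t x y z : R) : R :=
  let r := Rf t in
  let w := wcoord eps x y z in
  (1 + (bR r - r * Derive bR r) * w) / (1 + bR r * w).

Definition rhoF (eps : R) (Rf bR : R -> R) (t : R) : R :=
  3 / (Rf t) ^ 2 * ((Derive Rf t) ^ 2 + eps - 4 * (bR (Rf t)) ^ 2).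

(* Pressure  p = - rho - (R/3) rho'(R) / alpha,  rhoR : R |-> rho(R). *)
Definition pF (eps : R) (Rf bR rhoR : R -> R) (t x y z : R) : R :=
  - rhoF eps Rf bR t
  - Rf t / 3 * Derive rhoR (Rf t) / alphaF eps Rf bR t x y z.

(* Action of the fluid velocity u = alpha^{-1} d/dt on a spacetime function f(t,x,y,z). *)
Definition uact (eps : R) (Rf bR : R -> R) (f : R -> R -> R -> R -> R)
  (t x y z : R) : R :=
  / alphaF eps Rf bR t x y z * Derive (fun s => f s x y z) t.

Definition indicatrix (eps : R) (Rf bR rhoR : R -> R) (t x y z : R) : R :=
  uact eps Rf bR (pF eps Rf bR rhoR) t x y z
  / uact eps Rf bR (fun s _ _ _ => rhoF eps Rf bR s) t x y z.

Definition aR (rhoR : R -> R) (r : R) : R := - r * Derive rhoR r / (3 * rhoR r).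

Definition A1R (bR rhoR : R -> R) (r : R) : R :=
  - r * Derive (Derive bR) r / ((aR rhoR r) ^ 2 * Derive bR r).

Definition A2R (bR rhoR : R -> R) (r : R) : R :=
  r * Derive (Derive bR) r / (aR rhoR r * Derive bR r)
  - Derive (aR rhoR) r * r / (aR rhoR r) ^ 2
  - 1 / aR rhoR r.

(* Standing (nondegeneracy / regularity) assumptions at the event (t,x,y,z),
   together with the hypotheses Rdot <> 0, b'(R) <> 0, a(R) <> 0 of the statement. *)
Definition good_point (eps : R) (Rf bR rhoR : R -> R) (t x y z : R) : Prop :=
  let r := Rf t in
  let w := wcoord eps x y z in
  r <> 0 /\
  1 + eps / 4 * rsq x y z <> 0 /\
  1 + bR r * w <> 0 /\
  alphaF eps Rf bR t x y z <> 0 /\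
  ex_derive Rf t /\
  locally r (fun s => ex_derive bR s) /\ ex_derive (Derive bR) r /\
  locally r (fun s => ex_derive rhoR s) /\ ex_derive (Derive rhoR) r /\
  Derive Rf t <> 0 /\
  Derive bR r <> 0 /\
  aR rhoR r <> 0.

(* Main.v *)
Require Import Defs.
From Stdlib Require Import Reals Lra ClassicalEpsilon.
From Coquelicot Require Import Coquelicot.
Open Scope R_scope.

Lemma part1 (eps : R) (Rf bR rhoR : R -> R)
  (Hrho : forall t, rhoF eps Rf bR t = rhoR (Rf t)) :
  (forall t x y z, good_point eps Rf bR rhoR t x y z ->
     let r := Rf t in
     let w := wcoord eps x y z in
     let pi := pF eps Rf bR rhoR t x y z / rhoF eps Rf bR t in
     pi = aR rhoR r * (1 + bR r * w) / (1 + (bR r - r * Derive bR r) * w) - 1 /\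
     indicatrix eps Rf bR rhoR t x y z =
       pi + 1 / 3 + 1 / 3 * (pi + 1) * ((pi + 1) * A1R bR rhoR r + A2R bR rhoR r)).
Proof.
intros t x y z G.
destruct G as (Hr & Hw & HD & Ha & HRf & HbL & Hb2 & HrL & Hr2 & HRd & Hb1 & HaR).
cbv zeta.
set (w := wcoord eps x y z) in *.
assert (Hb : ex_derive bR (Rf t)) by exact (locally_singleton _ _ HbL).
assert (Hrh : ex_derive rhoR (Rf t)) by exact (locally_singleton _ _ HrL).
assert (Hrho0 : rhoR (Rf t) <> 0).
{ intro E; apply HaR; unfold aR; rewrite E; unfold Rdiv; rewrite Rmult_0_r, Rinv_0; ring. }
assert (Hrho1 : Derive rhoR (Rf t) <> 0).
{ intro E; apply HaR; unfold aR; rewrite E; unfold Rdiv; ring. }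
assert (HN : 1 + (bR (Rf t) - Rf t * Derive bR (Rf t)) * w <> 0).
{ unfold alphaF in Ha; cbv zeta in Ha; fold w in Ha.
  intro E; apply Ha; rewrite E; unfold Rdiv; ring. }
unfold alphaF in Ha; cbv zeta in Ha; fold w in Ha.
evar (lp : R).
assert (Dp : is_derive (fun s => - rhoR (Rf s) - Rf s / 3 * Derive rhoR (Rf s) /
   ((1 + (bR (Rf s) - Rf s * Derive bR (Rf s)) * w) / (1 + bR (Rf s) * w))) t lp).
{ auto_derive.
  - repeat split; auto.
  - unfold lp; reflexivity. }
assert (Ep : Derive (fun s => pF eps Rf bR rhoR s x y z) t = lp).
{ rewrite <- (is_derive_unique _ _ _ Dp). apply Derive_ext. intros s.
  unfold pF, alphaF; rewrite Hrho; reflexivity. }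
evar (lr : R).
assert (Dr : is_derive (fun s => rhoR (Rf s)) t lr).
{ auto_derive.
  - repeat split; auto.
  - unfold lr; reflexivity. }
assert (Er : Derive (fun s => rhoF eps Rf bR s) t = lr).
{ rewrite <- (is_derive_unique _ _ _ Dr). apply Derive_ext. intros s.
  rewrite Hrho; reflexivity. }
evar (la : R).
assert (Da : is_derive (fun r => - r * Derive rhoR r / (3 * rhoR r)) (Rf t) la).
{ auto_derive.
  - repeat split; auto. all: try (intro E; apply Hrho0; lra).
  - unfold la; reflexivity. }
assert (Ea : Derive (aR rhoR) (Rf t) = la).
{ rewrite <- (is_derive_unique _ _ _ Da). reflexivity. }
unfold indicatrix, uact. rewrite Ep, Er.
unfold lp, lr, la in *. clear lp lr la Dp Dr Da Ep Er.
unfold A1R, A2R. rewrite Ea.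
unfold pF, alphaF, aR. fold w. rewrite Hrho.
change (fun x0 : R => Rf x0) with Rf in *.
change (fun x0 : R => rhoR x0) with rhoR in *.
change (fun x0 : R => bR x0) with bR in *.
change (fun x0 : R => Derive rhoR x0) with (Derive rhoR) in *.
change (fun x0 : R => Derive bR x0) with (Derive bR) in *.
split; field; repeat split; auto.
Qed.

Theorem mainTheorem10
  (eps : R) (Rf bR rhoR : R -> R)
  (Heps : eps = 0 \/ eps = 1 \/ eps = -1)
  (Hrho : forall t, rhoF eps Rf bR t = rhoR (Rf t)) :
  (forall t x y z, good_point eps Rf bR rhoR t x y z ->
     let r := Rf t in
     let w := wcoord eps x y z in
     let pi := pF eps Rf bR rhoR t x y z / rhoF eps Rf bR t in
     pi = aR rhoR r * (1 + bR r * w) / (1 + (bR r - r * Derive bR r) * w) - 1 /\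
     indicatrix eps Rf bR rhoR t x y z =
       pi + 1 / 3 + 1 / 3 * (pi + 1) * ((pi + 1) * A1R bR rhoR r + A2R bR rhoR r))
  /\
  ((forall r1 r2, rhoR r1 = rhoR r2 -> r1 = r2) ->
   exists A1 A2 : R -> R,
     forall t x y z, good_point eps Rf bR rhoR t x y z ->
       let rho := rhoF eps Rf bR t in
       let pi := pF eps Rf bR rhoR t x y z / rho in
       indicatrix eps Rf bR rhoR t x y z =
         pi + 1 / 3 + 1 / 3 * (pi + 1) * ((pi + 1) * A1 rho + A2 rho)).
Proof.
split; [exact (part1 eps Rf bR rhoR Hrho) |].
intros Hinj.
set (inv := fun v => epsilon (inhabits 0) (fun r => rhoR r = v)).
assert (Hinv : forall r, inv (rhoR r) = r).
{ intros r. apply Hinj. unfold inv.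
  apply (epsilon_spec (inhabits 0) (fun r0 => rhoR r0 = rhoR r)). now exists r. }
exists (fun v => A1R bR rhoR (inv v)), (fun v => A2R bR rhoR (inv v)).
intros t x y z G. cbv zeta.
destruct (part1 eps Rf bR rhoR Hrho t x y z G) as [_ H].
rewrite Hrho, Hinv. rewrite Hrho in H. exact H.
Qed.
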